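(* For all sufficiently large $n\in\mathbb{N}$ there exists a graph $G$ on $n^{3/2}/(10^6\log n)$ vertices such that (i) every vertex of $G$ has degree at most $3n/(2\cdot 10^3)$; (ii) $G$ contains no clique on $10$ vertices; (iii) $G$ has no independent set of size $\sqrt{n}/50$.
   Context: Here $\log$ denotes the natural logarithm, and vertex counts are understood up to rounding to integers. *)

(* Defs.v *)
From mathcomp Require Import all_boot.
From Stdlib Require Import Reals.

Set Implicit Arguments.
Unset Strict Implicit.
Unset Printing Implicit Defensive.

Definition simple_graph (T : finType) (e : rel T) : Prop :=
  (forall x y, e x y = e y x) /\ (forall x, ~~ e x x).

Definition degree (T : finType) (e : rel T) (v : T) : nat := #|[set w | e v w]|.

Definition is_clique (T : finType) (e : rel T) (A : {set T}) : Prop :=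
  forall x y, x \in A -> y \in A -> x != y -> e x y.

Definition is_independent (T : finType) (e : rel T) (A : {set T}) : Prop :=
  forall x y, x \in A -> y \in A -> ~~ e x y.

(* Main.v *)
Require Import Defs.
From mathcomp Require Import all_boot all_order all_algebra.

Module CoreM.
Import Order.TTheory GRing.Theory Num.Theory.
Set Implicit Arguments.
Unset Strict Implicit.
Unset Printing Implicit Defensive.

Lemma subset_of_size (T : finType) (A : {set T}) k :
  (k <= #|A|)%N -> exists B : {set T}, B \subset A /\ #|B| = k.
Proof.
elim: k => [|k IH] hk; first by exists set0; rewrite sub0set cards0.
have [B [sBA cB]] := IH (ltnW hk).
have : (0 < #|A :\: B|)%N by rewrite cardsD (setIidPr sBA) cB subn_gt0.
case/card_gt0P => x; rewrite inE => /andP [xB xA].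
exists (x |: B); split; first by rewrite subUset sub1set xA sBA.
by rewrite cardsU1 xB cB.
Qed.

Lemma ffact_le_exp n j : (n ^_ j <= n ^ j)%N.
Proof.
elim: j => [|j IH]; first by rewrite ffactn0.
rewrite ffactnSr expnS mulnC; apply: leq_mul => //; exact: leq_subr.
Qed.

Section Core.
Variable R : realFieldType.
Local Open Scope ring_scope.
Variable m : nat.
Notation T := 'I_m.
Notation ET := {set 'I_m}.
Variable p : R.

Definition wt (b : bool) : R := if b then p else 1 - p.
Definition W (f : {ffun ET -> bool}) : R := \prod_(B : ET) wt (f B).

Lemma sumW : \sum_f W f = 1.
Proof.
rewrite /W -(bigA_distr_bigA (fun (B : ET) (b : bool) => wt b)).
rewrite big1 // => B _.
by rewrite big_bool /= /wt addrC subrK.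
Qed.

Definition ind (K : {set ET}) (b : bool) (f : {ffun ET -> bool}) : R :=
  \prod_(B in K) (f B == b)%:R.

Lemma event (K : {set ET}) b : \sum_f W f * ind K b f = wt b ^+ #|K|.
Proof.
transitivity (\sum_(f : {ffun ET -> bool})
   \prod_(B : ET) (wt (f B) * (if B \in K then (f B == b)%:R else 1))).
  by apply: eq_bigr => f _; rewrite big_split /= -big_mkcond.
rewrite -[LHS](bigA_distr_bigA (fun (B : ET) (c : bool) => wt c * (if B \in K then (c == b)%:R else 1))) /=.
rewrite -prodr_const [RHS]big_mkcond /=; apply: eq_bigr => B _.
rewrite big_bool /=; case: (B \in K); last by rewrite !mulr1 /wt addrC subrK.
by case: b => /=; rewrite ?mulr0 ?mulr1 ?addr0 ?add0r.
Qed.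

Lemma ind_ge0 (K : {set ET}) b (f : {ffun ET -> bool}) : 0 <= ind K b f.
Proof. by apply: prodr_ge0 => B _; rewrite ler0n. Qed.

Lemma ind1 (K : {set ET}) b (f : {ffun ET -> bool}) : (forall B, B \in K -> f B = b) -> ind K b f = 1.
Proof. by move=> H; rewrite /ind big1 // => B /H ->; rewrite eqxx. Qed.


Definition pairs (A : {set T}) : {set ET} := [set B : ET | B \subset A & #|B| == 2].
Definition star (v : T) (S : {set T}) : {set ET} := [set [set v; w] | w in S].
Definition edge (f : {ffun ET -> bool}) : rel T := fun i j => (i != j) && f [set i; j].

Lemma card_pairs A : #|pairs A| = 'C(#|A|, 2).
Proof. exact: cards_draws. Qed.

Lemma card_star v S : #|star v S| = #|S|.
Proof.
rewrite card_imset // => w w' E.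
have : w \in [set v; w'] by rewrite -E !inE eqxx orbT.
rewrite !inE => /orP [/eqP wv|/eqP //].
have : w' \in [set v; w] by rewrite E !inE eqxx orbT.
by rewrite wv !inE orbb => /eqP ->.
Qed.

Variables (k s : nat).

Definition S1 f := \sum_(A : {set T} | #|A| == 10) ind (pairs A) true f.
Definition S2 f := \sum_(v : T) \sum_(S : {set T} | #|S| == k) ind (star v S) true f.
Definition S3 f := \sum_(A : {set T} | #|A| == s) ind (pairs A) false f.

Lemma sum_sets_const j (c : R) : \sum_(A : {set T} | #|A| == j) c = 'C(m, j)%:R * c.
Proof.
rewrite sumr_const mulr_natl; congr (_ *+ _).
by rewrite -[in RHS](card_ord m) -(card_draws _ j); apply: eq_card => A; rewrite !inE.
Qed.

Lemma W_ge0 f : 0 <= p <= 1 -> 0 <= W f.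
Proof.
move=> /andP [p0 p1]; apply: prodr_ge0 => B _; rewrite /wt.
by case: (f B) => //; rewrite subr_ge0.
Qed.

Lemma exists_good : 0 <= p <= 1 ->
  'C(m, 10)%:R * p ^+ 45 + m%:R * ('C(m, k)%:R * p ^+ k) + 'C(m, s)%:R * (1 - p) ^+ 'C(s, 2) < 1 ->
  exists f, S1 f + S2 f + S3 f < 1.
Proof.
move=> hp hlt.
case: (boolP [exists f, S1 f + S2 f + S3 f < 1]) => [/existsP // | /existsPn H].
exfalso; move: hlt; apply/negP; rewrite -leNgt.
have E1 : \sum_f W f * S1 f = 'C(m, 10)%:R * p ^+ 45.
  under eq_bigr => f _ do rewrite /S1 mulr_sumr.
  rewrite exchange_big /= -sum_sets_const; apply: eq_bigr => A /eqP hA.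
  by rewrite event card_pairs hA.
have E2 : \sum_f W f * S2 f = m%:R * ('C(m, k)%:R * p ^+ k).
  under eq_bigr => f _ do rewrite /S2 mulr_sumr.
  rewrite exchange_big /= (eq_bigr (fun _ => 'C(m, k)%:R * p ^+ k)).
    by rewrite -(big_mkord xpredT (fun _ => 'C(m, k)%:R * p ^+ k)) sumr_const_nat subn0 -[LHS]mulr_natl.
  move=> v _; under eq_bigr => f _ do rewrite mulr_sumr.
  rewrite exchange_big /= -sum_sets_const; apply: eq_bigr => S /eqP hS.
  by rewrite event card_star hS.
have E3 : \sum_f W f * S3 f = 'C(m, s)%:R * (1 - p) ^+ 'C(s, 2).
  under eq_bigr => f _ do rewrite /S3 mulr_sumr.
  rewrite exchange_big /= -sum_sets_const; apply: eq_bigr => A /eqP hA.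
  by rewrite event card_pairs hA.
rewrite -E1 -E2 -E3 -!big_split /= -(sumW) ; apply: ler_sum => f _.
rewrite -!mulrDr -[X in X <= _]mulr1; apply: ler_wpM2l; first exact: W_ge0.
by rewrite leNgt H.
Qed.

Lemma sum_ge_term (I : finType) (P : pred I) (F : I -> R) i :
  P i -> (forall j, P j -> 0 <= F j) -> F i <= \sum_(j | P j) F j.
Proof.
move=> Pi F0; rewrite (bigD1 i) //= lerDl; apply: sumr_ge0 => j /andP [Pj _].
exact: F0.
Qed.

Lemma core_graph : 0 <= p <= 1 ->
  'C(m, 10)%:R * p ^+ 45 + m%:R * ('C(m, k)%:R * p ^+ k) + 'C(m, s)%:R * (1 - p) ^+ 'C(s, 2) < 1 ->
  exists e : rel 'I_m, simple_graph e /\ (forall v, degree e v < k)%N /\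
    (forall A : {set 'I_m}, #|A| = 10 -> ~ is_clique e A) /\
    (forall A : {set 'I_m}, is_independent e A -> #|A| < s)%N.
Proof.
move=> hp hlt; have [f Hf] := exists_good hp hlt.
have S10 : 0 <= S1 f by apply: sumr_ge0 => A _; apply: ind_ge0.
have S20 : 0 <= S2 f by apply: sumr_ge0 => v _; apply: sumr_ge0 => A _; apply: ind_ge0.
have S30 : 0 <= S3 f by apply: sumr_ge0 => A _; apply: ind_ge0.
exists (edge f); split; [|split; [|split]].
- split => [i j|i]; last by rewrite /edge eqxx.
  by rewrite /edge eq_sym setUC.
- move=> v; rewrite ltnNge; apply/negP => hk.
  have [S [sSN cS]] := subset_of_size hk.
  have h1 : ind (star v S) true f = 1.
    apply: ind1 => B /imsetP [w wS ->].
    by move/subsetP: sSN => /(_ w wS); rewrite inE => /andP [].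
  have : 1 <= S2 f.
    have hA : ind (star v S) true f <= \sum_(S' : {set T} | #|S'| == k) ind (star v S') true f.
      by apply: (@sum_ge_term _ (fun S' : {set T} => #|S'| == k)); [rewrite cS | move=> *; apply: ind_ge0].
    rewrite -h1; apply: le_trans hA _.
    apply: (@sum_ge_term _ xpredT (fun v => \sum_(S' : {set T} | #|S'| == k) ind (star v S') true f) v) => //.
    by move=> j _; apply: sumr_ge0 => *; apply: ind_ge0.
  move=> h; move: Hf; apply/negP; rewrite -leNgt.
  apply: le_trans h _; rewrite -addrA addrCA lerDl; exact: addr_ge0.
- move=> A cA hc.
  have h1 : ind (pairs A) true f = 1.
    apply: ind1 => B; rewrite /pairs inE => /andP [sBA /cards2P [x [y [xy hB]]]]; subst B.
    have xA : x \in A by apply: (subsetP sBA); rewrite !inE eqxx.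
    have yA : y \in A by apply: (subsetP sBA); rewrite !inE eqxx orbT.
    by have := hc x y xA yA xy; rewrite /edge => /andP [].
  have : 1 <= S1 f.
    rewrite -h1 /S1; apply: (@sum_ge_term _ (fun S : {set T} => #|S| == 10));
      [by rewrite cA | move=> *; apply: ind_ge0].
  move=> h; move: Hf; apply/negP; rewrite -leNgt.
  by apply: le_trans h _; rewrite -addrA lerDl; exact: addr_ge0.
- move=> A hi; rewrite ltnNge; apply/negP => hs.
  have [A' [sA cA']] := subset_of_size hs.
  have h1 : ind (pairs A') false f = 1.
    apply: ind1 => B; rewrite /pairs inE => /andP [sBA /cards2P [x [y [xy hB]]]]; subst B.
    have xA : x \in A by apply: (subsetP sA); apply: (subsetP sBA); rewrite !inE eqxx.
    have yA : y \in A by apply: (subsetP sA); apply: (subsetP sBA); rewrite !inE eqxx orbT.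
    by have := hi x y xA yA; rewrite /edge xy /= => /negbTE.
  have : 1 <= S3 f.
    rewrite -h1 /S3; apply: (@sum_ge_term _ (fun S : {set T} => #|S| == s));
      [by rewrite cA' | move=> *; apply: ind_ge0].
  move=> h; move: Hf; apply/negP; rewrite -leNgt.
  by apply: le_trans h _; rewrite lerDr; exact: addr_ge0.
Qed.
End Core.

Section Extra.
Variable R : realFieldType.
Local Open Scope ring_scope.

Lemma binom_bound (m j : nat) : ('C(m, j)%:R : R) * (j`!)%:R <= (m%:R) ^+ j.
Proof. by rewrite -natrM -natrX ler_nat bin_ffact ffact_le_exp. Qed.

Lemma C2 (s : nat) : (0 < s)%N -> ('C(s, 2)%:R : R) + 'C(s, 2)%:R = s%:R * (s%:R - 1).
Proof.
case: s => // s _.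
have h : ('C(s.+1, 2) * 2)%N = (s.+1 * s)%N.
  by rewrite -[2%N]/(2`!) bin_ffact ffactnS ffactn1.
by rewrite -natrD addnn -muln2 h natrM -[in X in _ * (X - _)]natr1 addrK.
Qed.
End Extra.

End CoreM.
Import CoreM.

From mathcomp Require Import Rstruct.
From Stdlib Require Import Reals Lra Lia.
From Stdlib Require Znat.

Module AnaM.
Section AnaS.
Local Open Scope R_scope.

Lemma div_ge0 a b : 0 <= a -> 0 < b -> 0 <= a / b.
Proof. intros; apply Rmult_le_pos; [auto| left; apply Rinv_0_lt_compat; auto]. Qed.

Lemma exp_pow z n : exp z ^ n = exp (z * INR n).
Proof.
induction n as [|n IH]; simpl.
- rewrite Rmult_0_r exp_0; reflexivity.
- rewrite IH -exp_plus; f_equal.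
  destruct n; simpl; ring.
Qed.

Lemma lt_exp_self z : z < exp z.
Proof. pose proof (exp_ineq1_le z); lra. Qed.

Lemma exp13 : exp (1/3) <= 5/3.
Proof.
pose proof exp_le_3.
assert (H1 : exp (1/3) ^ 3 = exp 1) by (rewrite exp_pow; f_equal; simpl; field).
pose proof (exp_pos (1/3)).
destruct (Rle_lt_dec (exp (1/3)) (5/3)) as [h|h]; auto.
exfalso. simpl in H1. nra.
Qed.

Lemma succ_pow k : INR (S k) ^ k <= 3 * INR k ^ k.
Proof.
destruct k as [|k].
- simpl; lra.
- set (a := INR (S k)).
  assert (ha : 0 < a) by (apply lt_0_INR; lia).
  assert (E : INR (S (S k)) = a * (1 + / a)) by (rewrite S_INR -/a; field; lra).
  rewrite E Rpow_mult_distr.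
  assert (h1 : (1 + / a) ^ S k <= exp (/ a) ^ S k).
  { apply pow_incr; split.
    - pose proof (Rinv_0_lt_compat a ha); lra.
    - pose proof (exp_ineq1_le (/ a)); lra. }
  rewrite exp_pow in h1.
  replace (/ a * INR (S k)) with 1 in h1 by (rewrite -/a; field; lra).
  pose proof exp_le_3.
  assert (0 <= a ^ S k) by (apply pow_le; lra).
  nra.
Qed.

Lemma kk_fact k : INR k ^ k <= 3 ^ k * INR (k`!).
Proof.
induction k as [|k IH].
- simpl; lra.
- rewrite factS -multE mult_INR.
  replace (INR (S k) ^ S k) with (INR (S k) * INR (S k) ^ k) by (simpl; ring).
  pose proof (succ_pow k).
  assert (0 <= INR (S k)) by apply pos_INR.
  replace (3 ^ S k * (INR (S k) * INR (k`!))) with (INR (S k) * (3 * (3 ^ k * INR (k`!)))) by (simpl; ring).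
  apply Rmult_le_compat_l; auto. nra.
Qed.

Lemma exp_sq z : 0 <= z -> z * z / 4 <= exp z.
Proof.
intros hz.
assert (h : z / 2 <= exp (z / 2)) by (pose proof (exp_ineq1_le (z/2)); lra).
assert (E : exp z = exp (z/2) * exp (z/2)) by (rewrite -exp_plus; f_equal; field).
rewrite E. nra.
Qed.

Lemma exp_le a b : a <= b -> exp a <= exp b.
Proof.
intros h; destruct (Rle_lt_or_eq_dec a b h) as [h'|h'].
- left; apply exp_increasing; auto.
- rewrite h'; lra.
Qed.

Lemma L35_bound L : 0 <= L -> L ^ 35 <= 64 ^ 35 * exp L.
Proof.
intros hL.
have h : L <= 64 * exp (L / 64) by pose proof (lt_exp_self (L/64)); lra.
have h2 : L ^ 35 <= (64 * exp (L / 64)) ^ 35 by apply pow_incr; lra.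
rewrite Rpow_mult_distr exp_pow in h2.
have h3 : exp (L / 64 * INR 35) <= exp L by apply exp_le; simpl; lra.
have h4 : 0 < 64 ^ 35 by apply pow_lt; lra.
nra.
Qed.

Definition B := (300 * 64) ^ 35.

Lemma B_pos : 0 < B.
Proof. unfold B; apply pow_lt; lra. Qed.

Lemma p35 x r L p : 0 < r -> 0 <= L -> p = 300 * L / r -> L ^ 35 <= 64 ^ 35 * x ->
  p ^ 35 <= B * x / r ^ 35.
Proof.
intros hr hL -> hL35.
unfold Rdiv, B; rewrite !Rpow_mult_distr pow_inv.
have h1 : 0 < / r ^ 35 by apply Rinv_0_lt_compat, pow_lt.
have h2 : 0 < 300 ^ 35 by apply pow_lt; lra.
have h3 : 0 <= L ^ 35 by apply pow_le.
nra.
Qed.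

Lemma term1 x r M p : 1 <= r -> x = r * r -> 0 <= M -> 0 <= p -> M * p <= x ->
  p ^ 35 <= B * x / r ^ 35 -> 4 * B + 1 <= r -> M ^ 10 * p ^ 45 <= 1 / 4.
Proof.
intros hr hx hM hp hMp h35 hrB.
have E : M ^ 10 * p ^ 45 = (M * p) ^ 10 * p ^ 35 by rewrite Rpow_mult_distr; ring.
rewrite E.
have h1 : (M * p) ^ 10 <= x ^ 10 by apply pow_incr; split; [apply Rmult_le_pos|]; auto.
have h0 : 0 <= p ^ 35 by apply pow_le.
have hx0 : 0 <= x ^ 10 by apply pow_le; nra.
have h2 : (M * p) ^ 10 * p ^ 35 <= x ^ 10 * (B * x / r ^ 35).
{ apply Rmult_le_compat; auto. apply pow_le; nra. }
apply (Rle_trans _ _ _ h2).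
have hr35 : 0 < r ^ 35 by apply pow_lt; lra.
have E2 : x ^ 10 * (B * x / r ^ 35) = B / r ^ 13.
{ rewrite hx. have -> : r ^ 35 = (r * r) ^ 11 * r ^ 13 by ring.
  have : r ^ 13 <> 0 by apply pow_nonzero; lra.
  have : (r * r) ^ 11 <> 0 by apply pow_nonzero; nra.
  intros; field; lra. }
rewrite E2.
have h13 : r <= r ^ 13 by (replace r with (r ^ 1) at 1 by ring; apply Rle_pow; [lra|lia]).
have hB := B_pos.
apply (Rle_trans _ (B / r)).
- unfold Rdiv. apply Rmult_le_compat_l; [lra|]. apply Rinv_le_contravar; lra.
- apply (Rmult_le_reg_r r); [lra|]. unfold Rdiv. field_simplify; lra.
Qed.

Lemma term2 x r M p (k : nat) : 1 <= r -> x = r * r -> 0 <= M -> M <= x * r -> 0 <= p ->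
  M * p <= 3 * x / 10 ^ 4 -> 3 * x / 2000 < INR k -> 64 * 10 ^ 6 <= r ->
  M * (M ^ k * p ^ k / INR (k`!)) <= 1 / 4.
Proof.
intros hr hx hM hMr hp hMp hk hr6.
have hx0 : 0 < x by nra.
have hk0 : 0 < INR k by nra.
have hkk : 0 < INR k ^ k by apply pow_lt.
have hf : 0 < INR (k`!) by apply lt_0_INR; apply/ltP; apply: fact_gt0.
have hkf := kk_fact k.
set q := M * p in hMp |- *.
have hq0 : 0 <= q by apply Rmult_le_pos.
have h1 : M ^ k * p ^ k / INR (k`!) <= (3 * q / INR k) ^ k.
{ rewrite -Rpow_mult_distr -/q.
  rewrite /Rdiv !Rpow_mult_distr pow_inv.
  have hq : 0 <= M ^ k * p ^ k by apply Rmult_le_pos; apply pow_le.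
  apply (Rmult_le_reg_r (INR (k`!) * INR k ^ k)); [nra|].
  have -> : M ^ k * p ^ k * / INR (k`!) * (INR (k`!) * INR k ^ k) = (M ^ k * p ^ k) * INR k ^ k by field; lra.
  have -> : 3 ^ k * (M ^ k * p ^ k) * / INR k ^ k * (INR (k`!) * INR k ^ k) = (M ^ k * p ^ k) * (3 ^ k * INR (k`!)) by field; lra.
  apply Rmult_le_compat_l; auto. }
have h2 : 3 * q / INR k <= exp (- (1 / 3)).
{ rewrite exp_Ropp. have := exp13. have := exp_pos (1/3). intros.
  apply (Rle_trans _ (3 / 5)).
  - apply (Rmult_le_reg_r (INR k)); auto. unfold Rdiv. field_simplify; lra.
  - apply (Rmult_le_reg_r (exp (1/3))); auto. field_simplify; lra. }
have h3 : (3 * q / INR k) ^ k <= exp (- (1 / 3)) ^ k.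
{ apply pow_incr; split; auto. apply div_ge0; lra. }
rewrite exp_pow in h3.
have h4 : exp (- (1 / 3) * INR k) <= exp (- (x / 2000)) by apply exp_le; lra.
have hz := exp_sq (x / 2000) ltac:(lra).
have hE : exp (- (x / 2000)) = / exp (x / 2000) by apply exp_Ropp.
have hEp : 0 < exp (x / 2000) by apply exp_pos.
have h5 : M ^ k * p ^ k / INR (k`!) <= / exp (x / 2000) by lra.
have h6 : 0 <= M ^ k * p ^ k / INR (k`!).
{ apply div_ge0; auto. apply Rmult_le_pos; apply pow_le; auto. }
apply (Rle_trans _ (x * r * / exp (x / 2000))).
{ apply Rmult_le_compat; auto. }
apply (Rmult_le_reg_r (exp (x / 2000))); auto.
have -> : x * r * / exp (x / 2000) * exp (x / 2000) = x * r by field; lra.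
rewrite hx in hz |- *. nra.
Qed.

Lemma term3 x r L M p (s c : nat) : 4 <= x -> 0 <= L -> x = exp L ->
  x * r = exp (3 / 2 * L) -> 600 <= r -> 0 <= M -> M <= x * r ->
  p = 300 * L / r -> p <= 1 -> r / 50 - 1 < INR s ->
  2 * INR c = INR s * (INR s - 1) -> M ^ s * (1 - p) ^ c <= 1 / 4.
Proof.
intros hx hL hxL hxr hr hM hMr hpdef hp1 hs hc.
have hp0 : 0 <= p by rewrite hpdef; apply div_ge0; lra.
have h1 : M ^ s <= exp (3 / 2 * L) ^ s by apply pow_incr; lra.
have h2 : (1 - p) ^ c <= exp (- p) ^ c.
{ apply pow_incr; split; [lra|]. pose proof (exp_ineq1_le (- p)); lra. }
rewrite !exp_pow in h1 h2.
have h3 : M ^ s * (1 - p) ^ c <= exp (3 / 2 * L * INR s) * exp (- p * INR c).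
{ apply Rmult_le_compat; auto; apply pow_le; lra. }
rewrite -exp_plus in h3.
have hpr : p * r = 300 * L by rewrite hpdef; field; lra.
have hps : 5 * L <= p * (INR s - 1).
{ apply (Rmult_le_reg_r r); [lra|]. nra. }
have hs1 : 1 <= INR s by lra.
have h4 : 3 / 2 * L * INR s + - p * INR c <= - L by nra.
have h5 : exp (- L) <= 1 / 4.
{ rewrite exp_Ropp -hxL. apply (Rmult_le_reg_r x); [lra|]. field_simplify; lra. }
have := exp_le _ _ h4. lra.
Qed.

End AnaS.
End AnaM.
Import AnaM.

Lemma nat_of_up (y : R) : (0 <= y)%R -> exists k : nat, (y < INR k <= y + 1)%R.
Proof.
move=> hy; have [h1 h2] := archimed y.
have hz : (0 <= up y)%Z by apply le_IZR; lra.
exists (Z.to_nat (up y)); rewrite INR_IZR_INZ Znat.Z2Nat.id //; lra.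
Qed.

Theorem lemma2p1 :
  exists N : nat, forall n : nat, (N <= n)%nat ->
    forall m : nat,
      (INR m <= INR n * sqrt (INR n) / (10 ^ 6 * ln (INR n)) < INR m + 1)%R ->
      exists e : rel 'I_m,
        simple_graph e /\
        (forall v : 'I_m, (INR (degree e v) <= 3 * INR n / (2 * 10 ^ 3))%R) /\
        (forall A : {set 'I_m}, #|A| = 10 -> ~ is_clique e A) /\
        (forall A : {set 'I_m}, is_independent e A -> (INR #|A| < sqrt (INR n) / 50)%R).
Proof.
have hB := B_pos.
pose R0 : R := (64 * 10 ^ 6 + 4 * B + 1 + 1440000)%R.
have hR0 : (64 * 10 ^ 6 + 4 * B + 1 + 1440000 <= R0)%R by rewrite /R0; lra.
have hR0' : (0 <= R0 * R0 + 4)%R by nra.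
have [N0 [hN0 _]] := @nat_of_up _ hR0'.
exists N0 => n hn m [hm _].
set x := INR n.
have hx : (R0 * R0 + 4 < x)%R.
{ have : (INR N0 <= x)%R by apply le_INR; apply/leP. lra. }
have hx0 : (0 < x)%R by nra.
set r := sqrt x.
have hrr : x = (r * r)%R by rewrite /r sqrt_sqrt //; lra.
have hr0 : (0 < r)%R by apply sqrt_lt_R0.
have hrR : (R0 <= r)%R by nra.
set L := ln x.
have hxL : x = exp L by rewrite /L exp_ln.
have hrL : r = exp (L / 2).
{ rewrite /r hxL -(sqrt_square (exp (L / 2))); last by left; apply exp_pos.
  by rewrite -exp_plus; congr (sqrt (exp _)); field. }
have hL1 : (1 <= L)%R.
{ case: (Rle_lt_dec 1 L) => // h; exfalso.
  have := exp_increasing _ _ h; have := exp_le_3; rewrite -hxL; nra. }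
set u := exp (L / 4).
have hu0 : (0 < u)%R by apply exp_pos.
have hur : r = (u * u)%R by rewrite hrL /u -exp_plus; congr exp; field.
have hLu : (L <= 4 * u)%R by have := lt_exp_self (L / 4); rewrite -/u; lra.
have hu : (1200 <= u)%R by nra.
pose p : R := (300 * L / r)%R.
have hp0 : (0 <= p)%R by apply div_ge0; lra.
have hp1 : (p <= 1)%R.
{ have h300 : (300 * L <= r)%R by nra.
  rewrite /p; apply (Rmult_le_reg_r r) => //; rewrite /Rdiv; field_simplify; lra. }
set M := INR m.
have hM0 : (0 <= M)%R by apply pos_INR.
have hMb : (M <= x * r / (10 ^ 6 * L))%R by [].
have hMxr : (M <= x * r)%R.
{ apply (Rle_trans _ _ _ hMb).
  have hxr : (0 < x * r)%R by apply Rmult_lt_0_compat.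
  apply (Rmult_le_reg_r (10 ^ 6 * L)); first nra.
  rewrite /Rdiv Rmult_assoc Rinv_l; nra. }
have hMp : (M * p <= 3 * x / 10 ^ 4)%R.
{ have : (M * p <= x * r / (10 ^ 6 * L) * p)%R by apply Rmult_le_compat_r.
  have -> : (x * r / (10 ^ 6 * L) * p = 3 * x / 10 ^ 4)%R by rewrite /p; field; lra.
  done. }
have hx4 : (4 <= x)%R by nra.
have hL0 : (0 <= L)%R by lra.
have hD : (0 <= 3 * x / 2000)%R by lra.
have [k [hk1 hk2]] := @nat_of_up _ hD.
have hy : (0 <= r / 50 - 1)%R by lra.
have [s [hs1 hs2]] := @nat_of_up _ hy.
have hs0 : (0 < s)%nat.
{ case: s hs1 hs2 => // hs1 _; simpl in hs1; lra. }
have hc : (2 * INR 'C(s, 2) = INR s * (INR s - 1))%R.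
{ have := @C2 R s hs0. rewrite -!INRE. move=> h.
  have h' : (INR 'C(s, 2) + INR 'C(s, 2) = INR s * (INR s - 1))%R by exact: h.
  lra. }
have binomR : forall a j : nat, (INR 'C(a, j) * INR (j`!) <= INR a ^ j)%R.
{ move=> a j; have := @binom_bound R a j; rewrite -!INRE -RpowE => /RleP h; exact: h. }
have factR : forall j : nat, (1 <= INR (j`!))%R.
{ move=> j; apply: (le_INR 1); apply/leP; exact: fact_gt0. }
have binomR' : forall a j : nat, (INR 'C(a, j) <= INR a ^ j)%R.
{ move=> a j; have := binomR a j; have := factR j; have := pos_INR 'C(a, j); nra. }
have hT1 : (INR 'C(m, 10) * p ^ 45 <= 1 / 4)%R.
{ have h35 : (p ^ 35 <= B * x / r ^ 35)%R.
  { apply: (@p35 x r L p hr0 hL0) => //; rewrite hxL; exact: L35_bound. }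
  have := @term1 x r M p.
  have hMx : (M * p <= x)%R by lra.
  move=> /(_ ltac:(lra) hrr hM0 hp0 hMx h35 ltac:(lra)) h1.
  apply: Rle_trans h1; apply Rmult_le_compat_r; [apply pow_le; lra| exact: binomR']. }
have hT2 : (M * (INR 'C(m, k) * p ^ k) <= 1 / 4)%R.
{ have h := @term2 x r M p k ltac:(lra) hrr hM0 hMxr hp0 hMp hk1 ltac:(lra).
  apply: Rle_trans h; apply Rmult_le_compat_l => //.
  have hf : (0 < INR (k`!))%R by have := factR k; lra.
  have := binomR m k; rewrite -/M => hb.
  apply (Rmult_le_reg_r (INR (k`!))) => //.
  have hpk : (0 <= p ^ k)%R by apply pow_le.
  have -> : (M ^ k * p ^ k / INR (k`!) * INR (k`!) = M ^ k * p ^ k)%R by field; lra.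
  nra. }
have hT3 : (INR 'C(m, s) * (1 - p) ^ 'C(s, 2) <= 1 / 4)%R.
{ have hxr : (x * r = exp (3 / 2 * L))%R.
  { rewrite hrL hxL -exp_plus; congr exp; field. }
  have := @term3 x r L M p s 'C(s, 2) hx4 hL0 hxL hxr ltac:(lra) hM0 hMxr erefl hp1 hs1 hc.
  move=> h; apply: Rle_trans h; apply Rmult_le_compat_r; [apply pow_le; lra| exact: binomR']. }
have hsum : (INR 'C(m, 10) * p ^ 45 + M * (INR 'C(m, k) * p ^ k) +
   INR 'C(m, s) * (1 - p) ^ 'C(s, 2) < 1)%R by lra.
case: (@core_graph R m p k s) => [||e [hsg [hdeg [hcl hind]]]].
- by apply/andP; split; apply/RleP.
- apply/RltP; rewrite -!INRE -!RpowE; exact: hsum.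
exists e; split; [exact: hsg|split; [|split; [exact: hcl|]]].
- move=> v; have := hdeg v => /leP /le_INR; rewrite S_INR.
  rewrite -/x; lra.
- move=> A /hind /ltP /lt_INR; rewrite -/x -/r; lra.
Qed.
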